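(* Let $S$ be a finite set of points in the plane whose convex hull is the triangle $ABC$ with $A,B,C\in S$, and suppose $S$ contains at least two points other than $A,B,C$. Let $A_1$ be a point of $S\setminus\{A,B,C\}$ at maximum distance from the line $BC$ among the points of $S\setminus\{A,B,C\}$, and let $A_2$ be a point of $S\setminus\{A,B,C,A_1\}$ at maximum distance from the line $BC$ among the points of $S\setminus\{A,B,C,A_1\}$. Then every triangulation of $S$ contains at least one of the segments $A_1A_2$ or $AA_2$ as an edge.
   Context: A triangulation of a finite planar point set $S$ is a maximal set of straight line segments whose endpoints are in $S$, which contain no point of $S$ other than their endpoints, and any two of which meet at most in a common endpoint. *)

(* Defs.v *)
From mathcomp Require Import all_boot all_order all_algebra.
Set Implicit Arguments. Unset Strict Implicit. Unset Printing Implicit Defensive.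
Import Order.TTheory GRing.Theory Num.Theory.
Local Open Scope ring_scope.

Section Plane.
Variable R : rcfType.
Definition pt := (R * R)%type.

(* twice the signed area of the triangle p q r *)
Definition cross (p q r : pt) : R :=
  (q.1 - p.1) * (r.2 - p.2) - (q.2 - p.2) * (r.1 - p.1).

Definition collinear (p q r : pt) : Prop := cross p q r = 0.

(* Euclidean distance from point p to the line through the distinct points b c *)
Definition dist_to_line (p b c : pt) : R :=
  `|cross b c p| / Num.sqrt ((c.1 - b.1) ^+ 2 + (c.2 - b.2) ^+ 2).

Definition in_hull (s : seq pt) (p : pt) : Prop :=
  exists w : nat -> R,
    (forall i, 0 <= w i) /\
    \sum_(i < size s) w i = 1 /\
    p = (\sum_(i < size s) w i * (nth (0, 0) s i).1,
         \sum_(i < size s) w i * (nth (0, 0) s i).2).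

(* a segment is given by its two endpoints; (p, q) and (q, p) denote the same segment *)
Definition seg := (pt * pt)%type.

Definition on_seg (e : seg) (x : pt) : Prop :=
  exists t : R, 0 <= t <= 1 /\
    x = ((1 - t) * e.1.1 + t * e.2.1, (1 - t) * e.1.2 + t * e.2.2).

Definition same_seg (e f : seg) : Prop :=
  e = f \/ e = (f.2, f.1).

Definition is_endpoint (e : seg) (x : pt) : Prop := x = e.1 \/ x = e.2.

Definition admissible_seg (S : seq pt) (e : seg) : Prop :=
  e.1 \in S /\ e.2 \in S /\ e.1 <> e.2 /\
  (forall r, r \in S -> on_seg e r -> is_endpoint e r).

Definition meet_ok (e f : seg) : Prop :=
  forall x, on_seg e x -> on_seg f x -> is_endpoint e x /\ is_endpoint f x.

Definition noncrossing_segs (S : seq pt) (E : seg -> Prop) : Prop :=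
  (forall e, E e -> admissible_seg S e) /\
  (forall e f, E e -> E f -> ~ same_seg e f -> meet_ok e f).

(* triangulation: a maximal such set of segments *)
Definition triangulation (S : seq pt) (E : seg -> Prop) : Prop :=
  noncrossing_segs S E /\
  (forall e, admissible_seg S e ->
     (forall f, E f -> same_seg e f \/ meet_ok e f) ->
     exists f, E f /\ same_seg e f).

Definition has_edge (E : seg -> Prop) (p q : pt) : Prop :=
  exists f, E f /\ same_seg f (p, q).

End Plane.

(* Main.v *)
Require Import Defs.
From mathcomp Require Import all_boot all_order all_algebra.
From mathcomp Require Import ring lra.
From Stdlib Require Import Classical.
Set Implicit Arguments. Unset Strict Implicit. Unset Printing Implicit Defensive.
Import Order.TTheory GRing.Theory Num.Theory.
Local Open Scope ring_scope.

Section Geo.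
Variable R : rcfType.
Implicit Types (p q x : pt R) (e f : seg R).

Definition comb (t : R) (p q : pt R) : pt R :=
  ((1 - t) * p.1 + t * q.1, (1 - t) * p.2 + t * q.2).

Lemma pairE2 (p q : pt R) : p.1 = q.1 -> p.2 = q.2 -> p = q.
Proof. by case: p; case: q => ? ? ? ? /= -> ->. Qed.

Lemma comb0 p q : comb 0 p q = p.
Proof. by apply: pairE2 => /=; ring. Qed.

Lemma comb1 p q : comb 1 p q = q.
Proof. by apply: pairE2 => /=; ring. Qed.

Lemma on_seg_swap p q x : on_seg (p, q) x -> on_seg (q, p) x.
Proof.
move=> [t [/andP[t0 t1] ex]]; exists (1 - t); split.
  by apply/andP; split; lra.
by rewrite ex; apply: pairE2 => /=; ring.
Qed.

Lemma endpoint_swap p q x : is_endpoint (p, q) x -> is_endpoint (q, p) x.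
Proof. by rewrite /is_endpoint /=; case; [right|left]. Qed.

Lemma meet_ok_swapl p q f : meet_ok (p, q) f -> meet_ok (q, p) f.
Proof.
move=> H x /on_seg_swap ex fx; case: (H x ex fx) => e1 e2; split => //.
exact: endpoint_swap.
Qed.

Lemma meet_ok_swapr p q f : meet_ok f (p, q) -> meet_ok f (q, p).
Proof.
move=> H x ex /on_seg_swap fx; case: (H x ex fx) => e1 e2; split => //.
exact: endpoint_swap.
Qed.

Lemma same_seg_sym e f : same_seg e f -> same_seg f e.
Proof. by case: e f => [a b] [c d]; rewrite /same_seg /=; case=> [[-> ->]|[-> ->]]; [left|right]. Qed.

Lemma lin1 (a b c z : R) : a - b = c * z -> z = 0 -> a = b.
Proof. by move=> H h1; apply/eqP; rewrite -subr_eq0 H h1 mulr0. Qed.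

Lemma lin2 (a b c1 c2 z1 z2 : R) : a - b = c1 * z1 + c2 * z2 -> z1 = 0 -> z2 = 0 -> a = b.
Proof. by move=> H h1 h2; apply/eqP; rewrite -subr_eq0 H h1 h2 !mulr0 addr0. Qed.

Lemma not_meet e f : ~ meet_ok e f ->
  exists x, on_seg e x /\ on_seg f x /\ ~ (is_endpoint e x /\ is_endpoint f x).
Proof.
move=> H; apply: NNPP => H'; apply: H => x ex fx; apply: NNPP => H2; apply: H'.
by exists x.
Qed.

Lemma shared_aux (S : seq (pt R)) P Q V (t s : R) :
  (forall r, r \in S -> on_seg (P, V) r -> is_endpoint (P, V) r) ->
  Q \in S -> Q <> P -> 0 < t -> 0 <= s <= t -> comb t P Q = comb s P V -> Q = V.
Proof.
move=> hV QS QP t0 /andP[s0 st] e.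
have tn : t != 0 by rewrite gt_eqF.
have e1 := congr1 fst e; have e2 := congr1 snd e; rewrite /= in e1 e2.
have eQ : Q = comb (s / t) P V.
  apply: pairE2 => /=.
    apply: (lin1 (c := t^-1) (z := (1 - t) * P.1 + t * Q.1 - ((1 - s) * P.1 + s * V.1))).
      by field.
    by rewrite e1 subrr.
  apply: (lin1 (c := t^-1) (z := (1 - t) * P.2 + t * Q.2 - ((1 - s) * P.2 + s * V.2))).
    by field.
  by rewrite e2 subrr.
have : is_endpoint (P, V) Q.
  apply: hV => //; exists (s / t); split => //.
  apply/andP; split; first by rewrite divr_ge0 // ltW.
  by rewrite ler_pdivrMr // mul1r.
by case.
Qed.

Lemma shared (S : seq (pt R)) P Q V x :
  (forall r, r \in S -> on_seg (P, Q) r -> is_endpoint (P, Q) r) ->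
  (forall r, r \in S -> on_seg (P, V) r -> is_endpoint (P, V) r) ->
  Q \in S -> V \in S -> Q <> P -> V <> P ->
  on_seg (P, Q) x -> on_seg (P, V) x -> x <> P -> Q = V.
Proof.
move=> hQ hV QS VS QP VP [t [/andP[t0 t1] ex]] [s [/andP[s0 s1] ex']] xP.
have {}ex : x = comb t P Q := ex.
have {}ex' : x = comb s P V := ex'.
have tp : 0 < t.
  rewrite lt_neqAle t0 andbT; apply/eqP => tz; apply: xP.
  by rewrite ex -tz comb0.
have sp : 0 < s.
  rewrite lt_neqAle s0 andbT; apply/eqP => sz; apply: xP.
  by rewrite ex' -sz comb0.
case: (lerP s t) => st.
  by apply: (shared_aux hV QS QP tp _ (etrans (esym ex) ex')); rewrite s0 st.
apply/esym; apply: (shared_aux hQ VS VP sp _ (etrans (esym ex') ex)).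
by rewrite t0 ltW.
Qed.

End Geo.
Section Main.
Variables (R : rcfType) (S : seq (pt R)) (A A1 A2 : pt R) (lev : pt R -> R)
  (E : seg R -> Prop).
Hypothesis lev_comb : forall t p q, lev (comb t p q) = (1 - t) * lev p + t * lev q.
Hypotheses (AS : A \in S) (A1S : A1 \in S) (A2S : A2 \in S).
Hypothesis levA : lev A = 1.
Hypothesis hA1 : lev A2 <= lev A1.
Hypothesis A1lt : lev A1 < 1.
Hypothesis hlt : lev A2 < 1.
Hypothesis high : forall p, p \in S -> lev A2 < lev p -> p = A \/ p = A1.
Hypothesis tri : triangulation S E.

Lemma neq_lev p q : lev p != lev q -> p <> q.
Proof. by move=> /eqP H e; apply: H; rewrite e. Qed.

Lemma classify P (f : seg R) x : P \in S -> lev A2 < lev P ->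
  admissible_seg S (P, A2) -> admissible_seg S f -> ~ same_seg (P, A2) f ->
  on_seg (P, A2) x -> on_seg f x -> ~ (is_endpoint (P, A2) x /\ is_endpoint f x) ->
  (exists t, 0 < t < 1 /\ x = comb t P A2) /\
  exists U W, (f = (U, W) \/ f = (W, U)) /\ U <> P /\ U \in S /\ lev A2 < lev U /\
     W \in S /\ lev W <= lev A2 /\ on_seg (U, W) x.
Proof.
case: f => f1 f2 PS hP [_ [_ [PA2 adme]]] [/= f1S [f2S [/= f12 admf]]] nsame oe ofx nend.
have xS : x \notin S.
  by apply/negP => xS; apply: nend; split; [exact: adme | exact: admf].
have xP : x <> P by move=> e; move/negP: xS; rewrite e.
case: (oe) => t [/andP[t0 t1] ex].
have {}ex : x = comb t P A2 := ex.
have tp : 0 < t.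
  rewrite lt_neqAle t0 andbT; apply/eqP => tz; apply: xP.
  by rewrite ex -tz comb0.
have tl : t < 1.
  rewrite lt_neqAle t1 andbT; apply/eqP => tz; move/negP: xS; apply.
  by rewrite ex tz comb1.
have levx : lev A2 < lev x by rewrite ex lev_comb; nra.
have n1 : f1 <> P.
  move=> e1; apply: nsame; left; rewrite e1; congr pair.
  apply: (shared adme _ A2S f2S _ _ oe _ xP).
  - by move=> r rS; rewrite -e1; exact: admf.
  - by move=> e2; apply: PA2; rewrite /= e2.
  - by move=> e2; apply: f12; rewrite e1 e2.
  - by rewrite -e1.
have n2 : f2 <> P.
  move=> e2; apply: nsame; right; rewrite e2 /=; congr pair.
  apply: (shared adme _ A2S f1S _ _ oe _ xP).
  - move=> r rS; rewrite -e2 => /on_seg_swap H.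
    by apply: endpoint_swap; exact: admf.
  - by move=> e3; apply: PA2; rewrite /= e3.
  - by move=> e3; apply: f12; rewrite e2 e3.
  - by rewrite -e2; apply: on_seg_swap.
case: (ofx) => s [/andP[s0 s1] ex'].
have {}ex' : x = comb s f1 f2 := ex'.
have hPP := high PS hP.
case: (ltP (lev A2) (lev f1)) => l1.
  case: (ltP (lev A2) (lev f2)) => l2.
    exfalso; move: n1 n2 f12.
    by case: (high f1S l1) (high f2S l2) hPP => -> [] -> [] -> a b c;
      by [apply: a | apply: b | apply: c].
  split; first by exists t; rewrite tp tl.
  by exists f1, f2; split; [left|split].
have l2 : lev A2 < lev f2.
  rewrite ltNge; apply/negP => l2; move: levx; rewrite ex' lev_comb; nra.
split; first by exists t; rewrite tp tl.
exists f2, f1; split; first by right.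
do 5!(split; first by []).

exact: on_seg_swap.
Qed.


Lemma adm_e P : P \in S -> lev A2 < lev P ->
  (forall r, r \in S -> r <> P -> lev A2 < lev r -> ~ on_seg (P, A2) r) ->
  admissible_seg S (P, A2).
Proof.
move=> PS lP H; split => //; split => //; split => /=.
  by apply: neq_lev; rewrite gt_eqF.
move=> r rS orr; case: (orr) => t [/andP[t0 t1] ex].
have {}ex : r = comb t P A2 := ex.
case: (ltP (lev A2) (lev r)) => lr.
  case: (eqVneq r P) => [e|rP]; first by left.
  by case: (H r rS (elimN eqP rP) lr).
right => /=.
have t1' : t = 1 by move: lr; rewrite ex lev_comb => lr; nra.
by rewrite ex t1' comb1.
Qed.

Lemma force (e : seg R) : admissible_seg S e ->
  (forall f, E f -> ~ same_seg e f -> meet_ok e f) -> has_edge E e.1 e.2.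
Proof.
case: tri => _ mx adm H.
have [f [Ef sf]] : exists f, E f /\ same_seg e f.
  apply: (mx e adm) => f Ef; case: (classic (same_seg e f)) => hs; first by left.
  by right; apply: H.
by exists f; split => //; case: e sf {adm H} => a b; exact: same_seg_sym.
Qed.

Lemma conv_lt1 (a b t : R) : a < 1 -> b < 1 -> 0 <= t -> t <= 1 ->
  (1 - t) * a + t * b < 1.
Proof. move=> ha hb t0 t1; case: (lerP a b) => ab; nra. Qed.

Lemma num1 (L X h : R) : 0 < L -> L <= 1 -> h < X -> X < 1 ->
  1 - L + L * X != 1 /\ h < 1 - L + L * X.
Proof. move=> *; split; [rewrite neq_lt; apply/orP; left|]; nra. Qed.

Lemma main_sec : has_edge E A1 A2 \/ has_edge E A A2.
Proof.
have admE f : E f -> admissible_seg S f := fun Ef => tri.1.1 f Ef.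
have ncE : forall e f, E e -> E f -> ~ same_seg e f -> meet_ok e f := tri.1.2.
have A1nA : A1 <> A by apply: neq_lev; rewrite levA lt_eqF.
have hAA : lev A2 < lev A by rewrite levA.
case: (ltP (lev A2) (lev A1)) => hA1s; last first.
  right.
  have adm2 : admissible_seg S (A, A2).
    apply: adm_e => // r rS rA lr; case: (high rS lr) => e; first by case: rA.
    by move: lr; rewrite e; lra.
  apply: (force adm2) => f Ef ns; apply: NNPP => nm.
  have [x [ox [fx nend]]] := not_meet nm.
  have [_ [U [W [_ [UA [US [lU _]]]]]]] :=
    classify AS hAA adm2 (admE f Ef) ns ox fx nend.
  case: (high US lU) => e; first by case: UA.
  by move: lU; rewrite e; lra.
have adm1 : admissible_seg S (A1, A2).
  apply: adm_e => // r rS rA1 lr; case: (high rS lr) => e; last by case: rA1.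
  rewrite e => -[t [/andP[t0 t1] ex]].
  have {}ex : A = comb t A1 A2 := ex.
  move: (congr1 lev ex); rewrite lev_comb levA => H.
  by move: H; apply/eqP; rewrite eq_sym lt_eqF // conv_lt1.
case: (classic (on_seg (A, A2) A1)) => onA1.
  left; apply: (force adm1) => f Ef ns; apply: NNPP => nm.
  have [x [ox [fx nend]]] := not_meet nm.
  have [[t [/andP[tp tl] ex]] [U [W [fo [UA1 [US [lU [WS [lW oUW]]]]]]]]] :=
    classify A1S hA1s adm1 (admE f Ef) ns ox fx nend.
  have eU : U = A.
    case: (high US lU) => [//|e0].
    by case: (UA1 e0).
  subst U.
  case: oUW => s [/andP[s0 s1] ex'].
  have {}ex' : x = comb s A W := ex'.
  case: onA1 => u [/andP[u0 u1] eu].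
  have {}eu : A1 = comb u A A2 := eu.
  have up : 0 < u.
    rewrite lt_neqAle u0 andbT; apply/eqP => uz; apply: A1nA.
    by rewrite eu -uz comb0.
  have wp : 0 < u + t - t * u by nra.
  have eA1 : A1 = comb (u * s / (u + t - t * u)) A W.
    have e1 := congr1 fst (etrans (esym ex) ex').
    have e2 := congr1 snd (etrans (esym ex) ex').
    have u1' := congr1 fst eu; have u2' := congr1 snd eu.
    rewrite /= in e1 e2 u1' u2'.
    apply: pairE2 => /=.
      apply: (lin2 (c1 := u / (u + t - t * u)) (c2 := 1 - u / (u + t - t * u) * (1 - t))
        (z1 := (1 - t) * A1.1 + t * A2.1 - ((1 - s) * A.1 + s * W.1))
        (z2 := A1.1 - ((1 - u) * A.1 + u * A2.1))).
      - by field; rewrite gt_eqF.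
      - by rewrite e1 subrr.
      - by rewrite {1}u1' subrr.
    apply: (lin2 (c1 := u / (u + t - t * u)) (c2 := 1 - u / (u + t - t * u) * (1 - t))
      (z1 := (1 - t) * A1.2 + t * A2.2 - ((1 - s) * A.2 + s * W.2))
      (z2 := A1.2 - ((1 - u) * A.2 + u * A2.2))).
    - by field; rewrite gt_eqF.
    - by rewrite e2 subrr.
    - by rewrite {1}u2' subrr.
  have oA1 : on_seg (A, W) A1.
    exists (u * s / (u + t - t * u)); split => //.
    apply/andP; split; first by rewrite divr_ge0 // ?mulr_ge0 // ltW.
    by rewrite ler_pdivrMr // mul1r; nra.
  have [_ [_ [_ af]]] := admE f Ef.
  have : is_endpoint (A, W) A1.
    case: fo af => -> af; first exact: af.
    by apply: endpoint_swap; apply: af => //; apply: on_seg_swap.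
  case => /= e; first by case: A1nA.
  by move: lW; rewrite -e; lra.
case: (classic (has_edge E A A2)) => [H|nH]; first by right.
left.
have adm2 : admissible_seg S (A, A2).
  apply: adm_e => // r rS rA lr; case: (high rS lr) => e; first by case: rA.
  by rewrite e.
have [f0 [Ef0 nf0]] : exists f0, E f0 /\ ~ (same_seg (A, A2) f0 \/ meet_ok (A, A2) f0).
  apply: NNPP => H; apply: nH; apply: (force adm2) => f Ef ns; apply: NNPP => nm.
  by apply: H; exists f; split => //; case.
have ns0 : ~ same_seg (A, A2) f0 by move=> s; apply: nf0; left.
have nm0 : ~ meet_ok (A, A2) f0 by move=> s; apply: nf0; right.
have [x0 [ox0 [fx0 nend0]]] := not_meet nm0.
have [[t0 [/andP[t0p t0l] ex0]] [U0 [W0 [fo0 [U0A [U0S [lU0 [W0S [lW0 oUW0]]]]]]]]] :=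
  classify AS hAA adm2 (admE f0 Ef0) ns0 ox0 fx0 nend0.
have eU0 : U0 = A1.
  case: (high U0S lU0) => [e0|//].
  by case: (U0A e0).
subst U0.
apply: (force adm1) => f Ef ns; apply: NNPP => nm.
have [x1 [ox1 [fx1 nend1]]] := not_meet nm.
have [[t1 [/andP[t1p t1l] ex1]] [U [V [fo [UA1 [US [lU [VS [lV oUV]]]]]]]]] :=
  classify A1S hA1s adm1 (admE f Ef) ns ox1 fx1 nend1.
have eU : U = A.
  case: (high US lU) => [//|e0].
  by case: (UA1 e0).
subst U.
have A1nV : A1 <> V by apply: neq_lev; rewrite gt_eqF //; apply: le_lt_trans hA1s.
have W0nA : W0 <> A by apply: neq_lev; rewrite levA lt_eqF //; apply: le_lt_trans hlt.
have nss : ~ same_seg f0 f.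
  case: fo0 => ->; case: fo => ->; rewrite /same_seg /=;
   case => -[e1 e2];
   by [exact: (A1nA e1) | exact: (A1nA e2) | exact: (A1nV e1) | exact: (A1nV e2)
      | exact: (W0nA e1) | exact: (W0nA e2)].
have mk' : meet_ok (A1, W0) (A, V).
  have mk := ncE f0 f Ef0 Ef nss.
  move: mk; case: fo0 => ->; case: fo => -> mk.
  - exact: mk.
  - exact: meet_ok_swapr mk.
  - exact: meet_ok_swapl mk.
  - exact: meet_ok_swapl (meet_ok_swapr mk).
case: oUW0 => s0 [/andP[s00 s01] ex0'].
have {}ex0' : x0 = comb s0 A1 W0 := ex0'.
case: oUV => s1 [/andP[s10 s11] ex1'].
have {}ex1' : x1 = comb s1 A V := ex1'.
have Dp : 0 < t0 + t1 - t0 * t1 by nra.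
have Dn : t0 + t1 - t0 * t1 != 0 by rewrite gt_eqF.
set D := t0 + t1 - t0 * t1 in Dp Dn.
have Lp : 0 < t0 / D by rewrite divr_gt0.
have L1 : t0 / D <= 1 by rewrite ler_pdivrMr // mul1r /D; nra.
have Mp : 0 <= t1 / D by rewrite divr_ge0 // ltW.
have M1 : t1 / D <= 1 by rewrite ler_pdivrMr // mul1r /D; nra.
set y := comb (t0 / D * s1) A V.
have ey : y = comb (t1 / D * s0) A1 W0.
  have e1 := congr1 fst (etrans (esym ex1') ex1).
  have e2 := congr1 snd (etrans (esym ex1') ex1).
  have f1 := congr1 fst (etrans (esym ex0') ex0).
  have f2 := congr1 snd (etrans (esym ex0') ex0).
  rewrite /= in e1 e2 f1 f2.
  apply: pairE2 => /=.
    apply: (lin2 (c1 := t0 / D) (c2 := - (t1 / D))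
      (z1 := (1 - s1) * A.1 + s1 * V.1 - ((1 - t1) * A1.1 + t1 * A2.1))
      (z2 := (1 - s0) * A1.1 + s0 * W0.1 - ((1 - t0) * A.1 + t0 * A2.1))).
    - by rewrite /D; field; rewrite -/D.
    - by rewrite e1 subrr.
    - by rewrite f1 subrr.
  apply: (lin2 (c1 := t0 / D) (c2 := - (t1 / D))
    (z1 := (1 - s1) * A.2 + s1 * V.2 - ((1 - t1) * A1.2 + t1 * A2.2))
    (z2 := (1 - s0) * A1.2 + s0 * W0.2 - ((1 - t0) * A.2 + t0 * A2.2))).
  - by rewrite /D; field; rewrite -/D.
  - by rewrite e2 subrr.
  - by rewrite f2 subrr.
have oy1 : on_seg (A, V) y.
  exists (t0 / D * s1); split => //.
  by apply/andP; split; [rewrite mulr_ge0 // ltW | rewrite mulr_ile1 // ltW].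
have oy0 : on_seg (A1, W0) y.
  exists (t1 / D * s0); split => //.
  by apply/andP; split; [rewrite mulr_ge0 // ltW | rewrite mulr_ile1 // ltW].
have [_ eV] := mk' y oy0 oy1.
have lx1 := etrans (esym (congr1 lev ex1')) (congr1 lev ex1).
rewrite !lev_comb levA in lx1.
have ly : lev y = 1 - t0 / D + t0 / D * ((1 - t1) * lev A1 + t1 * lev A2).
  rewrite /y lev_comb levA.
  apply: (lin1 (c := t0 / D) (z := (1 - s1) * 1 + s1 * lev V
     - ((1 - t1) * lev A1 + t1 * lev A2))); first by ring.
  by rewrite lx1 subrr.
have hX1 : lev A2 < (1 - t1) * lev A1 + t1 * lev A2 by nra.
have hX2 : (1 - t1) * lev A1 + t1 * lev A2 < 1 by rewrite conv_lt1 // ltW.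
have [n1 n2] := num1 Lp L1 hX1 hX2.
case: eV => /= e.
  by move/eqP: n1; apply; rewrite -ly e levA.
by move: n2; rewrite -ly e; lra.
Qed.

End Main.
Lemma hull_S (R : rcfType) (S : seq (pt R)) p : p \in S -> in_hull S p.
Proof.
move=> pS; have lt : (index p S < size S)%N by rewrite index_mem.
have key : forall F : nat -> R, \sum_(i < size S) (if (i : nat) == index p S then 1 else 0) * F i
   = F (index p S).
  move=> F; rewrite (bigD1 (Ordinal lt)) //= eqxx mul1r big1 ?addr0 // => j hj.
  rewrite ifF ?mul0r //; apply/negbTE; apply: contra hj => /eqP hj'.
  by apply/eqP; apply: val_inj.
exists (fun i => if i == index p S then 1 else 0); split.
  by move=> i; case: ifP.
split.
  by have := key (fun _ => 1); under eq_bigr do rewrite mulr1.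
have k1 := key (fun i => (nth (0, 0) S i).1); have k2 := key (fun i => (nth (0, 0) S i).2).
rewrite /= in k1 k2; rewrite k1 k2 nth_index //; by case: (p).
Qed.

Lemma hull3 (R : rcfType) (A B C p : pt R) : in_hull [:: A; B; C] p ->
  exists w0 w1 w2 : R, [/\ 0 <= w0, 0 <= w1, 0 <= w2, w0 + w1 + w2 = 1 &
    p = (w0 * A.1 + w1 * B.1 + w2 * C.1, w0 * A.2 + w1 * B.2 + w2 * C.2)].
Proof.
move=> [w [w0 [s1 ep]]]; exists (w 0%N), (w 1%N), (w 2%N).
move: s1 ep; rewrite !big_ord_recl !big_ord0 /= => s1 ->.
split => //; first by rewrite -s1 !addr0 addrA.
by rewrite !addr0 !addrA.
Qed.

Theorem lemma4p3 (R : rcfType) (S : seq (pt R)) (A B C A1 A2 : pt R) :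
  A \in S -> B \in S -> C \in S ->
  ~ collinear A B C ->
  (forall p, in_hull S p <-> in_hull [:: A; B; C] p) ->
  A1 \in S -> A1 \notin [:: A; B; C] ->
  (forall P, P \in S -> P \notin [:: A; B; C] ->
     dist_to_line P B C <= dist_to_line A1 B C) ->
  A2 \in S -> A2 \notin [:: A; B; C; A1] ->
  (forall P, P \in S -> P \notin [:: A; B; C; A1] ->
     dist_to_line P B C <= dist_to_line A2 B C) ->
  forall E : seg R -> Prop, triangulation S E ->
    has_edge E A1 A2 \/ has_edge E A A2.
Proof.
move=> AS BS CS nc hull A1S A1n dA1 A2S A2n dA2 E tri.
have a0 : cross B C A != 0.
  apply/eqP => H; apply: nc; rewrite /collinear -H /cross; ring.
pose lev p := cross B C p / cross B C A.
have lev_comb t p q : lev (comb t p q) = (1 - t) * lev p + t * lev q.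
  by rewrite /lev /cross /comb /=; field.
have levA : lev A = 1 by rewrite /lev divff.
have levB : lev B = 0 by rewrite /lev /cross; field.
have hw p : p \in S -> exists w0 w1 w2 : R, [/\ 0 <= w0, 0 <= w1, 0 <= w2,
    w0 + w1 + w2 = 1 &
    p = (w0 * A.1 + w1 * B.1 + w2 * C.1, w0 * A.2 + w1 * B.2 + w2 * C.2)].
  by move=> pS; apply: hull3; apply/hull; apply: hull_S.
have levw p : p \in S -> exists w0 w1 w2 : R, [/\ 0 <= w0, 0 <= w1, 0 <= w2,
    w0 + w1 + w2 = 1 &
    p = (w0 * A.1 + w1 * B.1 + w2 * C.1, w0 * A.2 + w1 * B.2 + w2 * C.2)] /\ lev p = w0.
  move=> pS; have [w0 [w1 [w2 [h0 h1 h2 hs ep]]]] := hw p pS.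
  exists w0, w1, w2; split => //.
  rewrite /lev ep /cross /=.
  have -> : w2 = 1 - w0 - w1 by rewrite -hs; ring.
  by field.
have lev01 p : p \in S -> 0 <= lev p <= 1.
  move=> pS; have [w0 [w1 [w2 [[h0 h1 h2 hs ep] ->]]]] := levw p pS.
  by rewrite h0 /=; lra.
have lev1 p : p \in S -> lev p = 1 -> p = A.
  move=> pS; have [w0 [w1 [w2 [[h0 h1 h2 hs ep] ->]]]] := levw p pS => e1.
  have e2 : w1 = 0 by lra.
  have e3 : w2 = 0 by lra.
  by rewrite ep e1 e2 e3; apply: pairE2 => /=; ring.
have sq : 0 < Num.sqrt ((C.1 - B.1) ^+ 2 + (C.2 - B.2) ^+ 2).
  rewrite sqrtr_gt0 lt_def addr_ge0 ?sqr_ge0 // andbT.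
  apply/negP => /eqP; move/eqP; rewrite paddr_eq0 ?sqr_ge0 // !sqrf_eq0 !subr_eq0.
  move=> /andP[/eqP e1 /eqP e2]; apply: nc; rewrite /collinear /cross e1 e2; ring.
have dle P Q : P \in S -> Q \in S -> dist_to_line P B C <= dist_to_line Q B C ->
    lev P <= lev Q.
  move=> PS QS; rewrite /dist_to_line ler_pM2r ?invr_gt0 //.
  have cP X : X \in S -> `|cross B C X| = `|cross B C A| * lev X.
    move=> XS; rewrite -(ger0_norm (proj1 (andP (lev01 X XS)))) -normrM.
    by congr `|_|; rewrite /lev; field.
  by rewrite (cP P) // (cP Q) // ler_pM2l // normr_gt0.
have lB : lev A2 >= 0 by have /andP[] := lev01 A2 A2S.
have A2n' : A2 \notin [:: A; B; C].
  by move: A2n; rewrite !inE; apply: contra => /or3P[] ->; rewrite ?orbT.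
have hA1 : lev A2 <= lev A1 by apply: dle => //; apply: dA1.
have A1nA : A1 != A by move: A1n; rewrite !inE; apply: contra => ->.
have A2nA : A2 != A by move: A2n; rewrite !inE; apply: contra => ->.
have A1lt : lev A1 < 1.
  rewrite lt_neqAle (proj2 (andP (lev01 A1 A1S))) andbT.
  by apply/eqP => e; move/eqP: A1nA; apply; apply: lev1.
have hlt : lev A2 < 1.
  rewrite lt_neqAle (proj2 (andP (lev01 A2 A2S))) andbT.
  by apply/eqP => e; move/eqP: A2nA; apply; apply: lev1.
have high p : p \in S -> lev A2 < lev p -> p = A \/ p = A1.
  move=> pS lp; case: (boolP (p \in [:: A; B; C; A1])) => hp.
    move: hp; rewrite !inE => /or4P[] /eqP e; rewrite e in lp *;
      [by left | | | by right].
    - by exfalso; move: lp; rewrite levB; lra.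
    - have : lev C = 0 by rewrite /lev /cross; field.
      by move=> lC; exfalso; move: lp; rewrite lC; lra.
  exfalso; move: lp; rewrite ltNge => /negP; apply; apply: dle => //.
  exact: dA2.
exact: (main_sec lev_comb AS A1S A2S levA A1lt hlt high tri).
Qed.
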